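(* Assume (A1)–(A4) and the latent index model (LI) below. Then $h_\ell(u)\ge0$ for all $\ell=1,\dots,L$ and all $u\in[0,1]$.
   Context: Observe i.i.d. $(Y_i,D_i,\mathbf Z_i)$, $D_i\in\{0,1\}$, $\mathbf Z_i=(Z_{1i},\dots,Z_{Li})'\in\{0,1\}^L$, $L\ge2$; potential outcomes $Y_i(0),Y_i(1)$ and compliance type $D_i(\cdot):\{0,1\}^L\to\{0,1\}$ with $D_i=D_i(\mathbf Z_i)$. $p_\ell=P(Z_{\ell i}=1)$, $\pi_\ell=\mathbb E[D_i\mid Z_{\ell i}=1]-\mathbb E[D_i\mid Z_{\ell i}=0]$, $\Sigma_Z=\mathrm{Var}(\mathbf Z_i)$; $Z_{-\ell}$ is the vector of instruments other than $Z_\ell$. (LI): $D_i=\mathbf 1\{V(\mathbf Z_i)\ge U_i\}$ with $V$ measurable and $U_i\sim\mathrm{Uniform}(0,1)$ conditional on potential outcomes; $p(z)=P(D_i=1\mid\mathbf Z_i=z)=V(z)$ and $$h_\ell(u)=\frac{P(p(\mathbf Z_i)\ge u\mid Z_{\ell i}=1)-P(p(\mathbf Z_i)\ge u\mid Z_{\ell i}=0)}{\mathbb E[p(\mathbf Z_i)\mid Z_{\ell i}=1]-\mathbb E[p(\mathbf Z_i)\mid Z_{\ell i}=0]}.$$ Assumptions: (A1) $(Y_i(0),Y_i(1),D_i(\cdot))$ independent of $\mathbf Z_i$. (A2) $D_i(z)$ nondecreasing in each coordinate for every $i$. (A3) $p_\ell>0$, $\pi_\ell>0$ for all $\ell$;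 $\Sigma_Z$ positive definite. (A4) For each $\ell$, $\mathbb E[f(Z_{-\ell})\mid Z_\ell=1]\ge\mathbb E[f(Z_{-\ell})\mid Z_\ell=0]$ for every nondecreasing $f:\{0,1\}^{L-1}\to\mathbb R$. *)

(* Defs.v *)
From HB Require Import structures.
From mathcomp Require Import all_boot all_order all_algebra.
From mathcomp Require Import all_classical all_reals all_analysis.
Set Implicit Arguments. Unset Strict Implicit. Unset Printing Implicit Defensive.
Import Order.TTheory GRing.Theory Num.Theory.
Local Open Scope classical_set_scope.
Local Open Scope ring_scope.

Definition zvec (L : nat) := {ffun 'I_L -> bool}.
Definition ctype (L : nat) := {ffun zvec L -> bool}.

Definition vle (n : nat) (z z' : {ffun 'I_n -> bool}) : Prop :=
  forall k, (z k ==> z' k).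

Definition zminus (L : nat) (l : 'I_L) (z : zvec L) : {ffun 'I_L.-1 -> bool} :=
  [ffun k => z (lift l k)].

Section Defs.
Context (R : realType) (d : measure_display) (Omega : measurableType d)
        (P : probability Omega R).

Definition pr (A : set Omega) : R := fine (P A).

Definition cprob (A B : set Omega) : R := pr (A `&` B) / pr B.

Definition condEZ (L : nat) (Z : Omega -> zvec L) (g : zvec L -> R)
    (B : set Omega) : R :=
  \sum_(z : zvec L) g z * cprob (Z @^-1` [set z]) B.

Definition Zis (L : nat) (Z : Omega -> zvec L) (l : 'I_L) (b : bool) : set Omega :=
  [set w | Z w l = b].

Definition Dobs (L : nat) (Z : Omega -> zvec L) (Dt : Omega -> ctype L) : set Omega :=
  [set w | Dt w (Z w)].

Definition pscore (L : nat) (Z : Omega -> zvec L) (Dt : Omega -> ctype L)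
    (z : zvec L) : R :=
  cprob (Dobs Z Dt) (Z @^-1` [set z]).

Definition pi_l (L : nat) (Z : Omega -> zvec L) (Dt : Omega -> ctype L) (l : 'I_L) : R :=
  cprob (Dobs Z Dt) (Zis Z l true) - cprob (Dobs Z Dt) (Zis Z l false).

(* Sigma_Z = Var(Z): Cov(Z_k, Z_j) for Bernoulli coordinates *)
Definition SigmaZ (L : nat) (Z : Omega -> zvec L) : 'M[R]_L :=
  \matrix_(k, j) (pr (Zis Z k true `&` Zis Z j true)
                  - pr (Zis Z k true) * pr (Zis Z j true)).

Definition posdef (n : nat) (M : 'M[R]_n) : Prop :=
  forall x : 'cV[R]_n, x != 0 -> 0 < (x^T *m M *m x) 0 0.

Definition h_l (L : nat) (Z : Omega -> zvec L) (Dt : Omega -> ctype L)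
    (l : 'I_L) (u : R) : R :=
  let p := pscore Z Dt in
  (cprob [set w | u <= p (Z w)] (Zis Z l true)
   - cprob [set w | u <= p (Z w)] (Zis Z l false))
  / (condEZ Z p (Zis Z l true) - condEZ Z p (Zis Z l false)).

End Defs.

(* Main.v *)
Require Import Defs.
From HB Require Import structures.
From mathcomp Require Import all_boot all_order all_algebra.
From mathcomp Require Import all_classical all_reals all_analysis.
Import Order.TTheory GRing.Theory Num.Theory.
Local Open Scope classical_set_scope.
Local Open Scope ring_scope.
Set Implicit Arguments. Unset Strict Implicit.

Section Aux.
Context (R : realType) (d : measure_display) (Omega : measurableType d)
        (P : probability Omega R).

Lemma pr_fin (A : set Omega) : measurable A -> P A \is a fin_num.
Proof. by move=> mA; apply: fin_num_measure. Qed.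

Lemma pr_ge0 (A : set Omega) : 0 <= pr P A.
Proof. by rewrite /pr; apply: fine_ge0; apply: measure_ge0. Qed.

Lemma pr0 : pr P set0 = 0.
Proof. by rewrite /pr measure0. Qed.

Lemma pr_le (A B : set Omega) : measurable A -> measurable B -> A `<=` B ->
  pr P A <= pr P B.
Proof.
move=> mA mB AB; rewrite /pr; apply: fine_le; try exact: pr_fin.
by apply: le_measure => //; rewrite inE.
Qed.

Lemma prU (A B : set Omega) : measurable A -> measurable B -> A `&` B = set0 ->
  pr P (A `|` B) = pr P A + pr P B.
Proof.
move=> mA mB AB; rewrite /pr measureU // fineD //; exact: pr_fin.
Qed.

Lemma cprob_ge0 (A B : set Omega) : 0 <= cprob P A B.
Proof. by rewrite /cprob divr_ge0 // pr_ge0. Qed.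


Variables (L : nat) (Z : Omega -> zvec L).
Hypothesis hZ : forall B : set (zvec L), measurable (Z @^-1` B).

Lemma decomp_seq (s : seq (zvec L)) (C : set Omega) : uniq s -> measurable C ->
  pr P ([set w | Z w \in s] `&` C) = \sum_(z <- s) pr P (Z @^-1` [set z] `&` C).
Proof.
move=> + mC; elim: s => [|x s IH] /=.
  rewrite big_nil (_ : _ `&` C = set0) ?pr0 //.
  by apply/seteqP; split => w //= [].
move=> /andP[xs us]; rewrite big_cons -IH //.
have -> : [set w | Z w \in x :: s] `&` C =
   (Z @^-1` [set x] `&` C) `|` ([set w | Z w \in s] `&` C).
  apply/seteqP; split => w /=.
    by move=> [+ Cw]; rewrite inE => /orP[/eqP ->|ws]; [left|right].
  by move=> [[-> Cw]|[ws Cw]]; split => //; rewrite inE ?eqxx ?ws ?orbT.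
rewrite prU //.
- exact: measurableI.
- apply: measurableI => //; exact: (hZ [set z | z \in s]).
apply/seteqP; split => w //= [[-> _] [ws _]].
by rewrite ws in xs.
Qed.

Lemma cprob_condEZ (S : zvec L -> bool) (C : set Omega) : measurable C ->
  cprob P [set w | S (Z w)] C = condEZ P Z (fun z => (S z)%:R) C.
Proof.
move=> mC; rewrite /cprob /condEZ.
have -> : [set w | S (Z w)] = [set w | Z w \in [seq z <- enum (zvec L) | S z]].
  by apply/seteqP; split => w /=; rewrite mem_filter mem_enum andbT.
rewrite decomp_seq //; last by apply: filter_uniq; apply: enum_uniq.
rewrite big_filter big_mkcond mulr_suml /=.
rewrite [in RHS](eq_bigr (fun z => if S z then pr P (Z @^-1` [set z] `&` C) / pr P C else 0)).
  by rewrite -big_enum /=; apply: eq_bigr => z _; case: (S z); rewrite ?mul0r.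
by move=> z _; case: (S z); rewrite ?mul1r ?mul0r.
Qed.


Definition ins (l : 'I_L) (b : bool) (x : {ffun 'I_L.-1 -> bool}) : zvec L :=
  [ffun k => if unlift l k is Some j then x j else b].

Lemma zminus_ins l b x : zminus l (ins l b x) = x.
Proof. by apply/ffunP => k; rewrite !ffunE liftK. Qed.

Lemma ins_zminus l (z : zvec L) : ins l (z l) (zminus l z) = z.
Proof.
apply/ffunP => k; rewrite ffunE.
by case: unliftP => [j ->|->] //; rewrite ffunE.
Qed.

Lemma ins_mono l b b' x y : (b ==> b') -> vle x y -> vle (ins l b x) (ins l b' y).
Proof.
move=> bb xy k; rewrite !ffunE; case: unlift => [j|] //; exact: xy.
Qed.

Lemma condEZ_ins (g : zvec L -> R) l b :
  condEZ P Z g (Zis Z l b) = condEZ P Z (fun z => g (ins l b (zminus l z))) (Zis Z l b).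
Proof.
rewrite /condEZ; apply: eq_bigr => z _.
have [<-|zb] := eqVneq (z l) b; first by rewrite ins_zminus.
rewrite /cprob (_ : _ `&` _ = set0) ?pr0 ?mul0r ?mulr0 //.
apply/seteqP; split => w //= [Zw]; rewrite /Zis /= Zw => zlb.
by rewrite zlb eqxx in zb.
Qed.

Lemma mono_condEZ (l : 'I_L) (g : zvec L -> R) :
  (forall z z', vle z z' -> g z <= g z') ->
  (forall (f : {ffun 'I_L.-1 -> bool} -> R),
     (forall x y, vle x y -> f x <= f y) ->
     condEZ P Z (fun z => f (zminus l z)) (Zis Z l true)
     >= condEZ P Z (fun z => f (zminus l z)) (Zis Z l false)) ->
  condEZ P Z g (Zis Z l false) <= condEZ P Z g (Zis Z l true).
Proof.
move=> gm A4.
rewrite condEZ_ins (condEZ_ins _ _ true).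
apply: le_trans (A4 (fun x => g (ins l false x)) _) _.
  by move=> x y xy; apply: gm; apply: ins_mono.
rewrite /condEZ; apply: ler_sum => z _; apply: ler_wpM2r; first exact: cprob_ge0.
by apply: gm; apply: ins_mono => // k; rewrite implybb.
Qed.


Variables (Y0 Y1 : Omega -> R) (Dt : Omega -> ctype L).
Hypothesis hDt : forall S : set (ctype L), measurable (Dt @^-1` S).
Hypothesis A1 : forall (A0 A1 : set R) (S : set (ctype L)) (B : set (zvec L)),
     measurable A0 -> measurable A1 ->
     P (Y0 @^-1` A0 `&` Y1 @^-1` A1 `&` Dt @^-1` S `&` Z @^-1` B)
     = (P (Y0 @^-1` A0 `&` Y1 @^-1` A1 `&` Dt @^-1` S) * P (Z @^-1` B))%E.
Hypothesis A2 : forall w (z z' : zvec L), vle z z' -> Dt w z ==> Dt w z'.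

Definition q (z : zvec L) := pr P (Dt @^-1` [set D : ctype L | D z]).

Lemma q_mono z z' : vle z z' -> q z <= q z'.
Proof.
move=> zz; apply: pr_le => //= w /=.
by move: (A2 w zz) => /implyP; apply.
Qed.

Lemma pq (g : R -> R) (z : zvec L) (C : set Omega) : measurable C ->
  g (pscore P Z Dt z) * cprob P (Z @^-1` [set z]) C
  = g (q z) * cprob P (Z @^-1` [set z]) C.
Proof.
move=> mC.
have [z0|zn0] := eqVneq (pr P (Z @^-1` [set z])) 0.
  have -> : cprob P (Z @^-1` [set z]) C = 0.
    rewrite /cprob (_ : pr P _ = 0) ?mul0r //.
    apply/eqP; rewrite eq_le pr_ge0 andbT -z0.
    apply: pr_le => //; try exact: measurableI; by move=> w [].
  by rewrite !mulr0.
congr (g _ * _).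
rewrite /pscore /cprob.
have -> : Dobs Z Dt `&` Z @^-1` [set z] =
    Dt @^-1` [set D : ctype L | D z] `&` Z @^-1` [set z].
  by apply/seteqP; split => w /= [Dw Zw]; split => //; move: Dw; rewrite /Dobs /= Zw.
have := @A1 setT setT [set D : ctype L | D z] [set z] measurableT measurableT.
rewrite !preimage_setT !setTI /pr => ->.
rewrite fineM; try exact: pr_fin.
exact: (mulfK zn0).
Qed.

End Aux.

Theorem proposition14 (R : realType) (d : measure_display)
  (Omega : measurableType d) (P : probability Omega R) (L : nat)
  (Y0 Y1 : Omega -> R) (Dt : Omega -> ctype L) (Z : Omega -> zvec L)
  (V : zvec L -> R) (U : Omega -> R) :
  (2 <= L)%N ->
  (* measurability of the random elements *)
  measurable_fun setT Y0 -> measurable_fun setT Y1 -> measurable_fun setT U ->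
  (forall S : set (ctype L), measurable (Dt @^-1` S)) ->
  (forall B : set (zvec L), measurable (Z @^-1` B)) ->
  (* (A1) (Y(0), Y(1), D(.)) independent of Z *)
  (forall (A0 A1 : set R) (S : set (ctype L)) (B : set (zvec L)),
     measurable A0 -> measurable A1 ->
     P (Y0 @^-1` A0 `&` Y1 @^-1` A1 `&` Dt @^-1` S `&` Z @^-1` B)
     = (P (Y0 @^-1` A0 `&` Y1 @^-1` A1 `&` Dt @^-1` S) * P (Z @^-1` B))%E) ->
  (* (A2) monotonicity of every compliance type *)
  (forall w (z z' : zvec L), vle z z' -> Dt w z ==> Dt w z') ->
  (* (A3) *)
  (forall l : 'I_L, 0 < pr P (Zis Z l true)) ->
  (forall l : 'I_L, 0 < pi_l P Z Dt l) ->
  posdef (SigmaZ P Z) ->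
  (* (A4) *)
  (forall (l : 'I_L) (f : {ffun 'I_L.-1 -> bool} -> R),
     (forall x y, vle x y -> f x <= f y) ->
     condEZ P Z (fun z => f (zminus l z)) (Zis Z l true)
     >= condEZ P Z (fun z => f (zminus l z)) (Zis Z l false)) ->
  (* (LI) latent index model *)
  (forall w (z : zvec L), Dt w z = (U w <= V z)) ->
  (* U ~ Uniform(0,1) conditional on the potential outcomes *)
  (forall (A0 A1 : set R) (t : R), measurable A0 -> measurable A1 ->
     0 <= t <= 1 ->
     P (Y0 @^-1` A0 `&` Y1 @^-1` A1 `&` U @^-1` `]-oo, t])
     = (t%:E * P (Y0 @^-1` A0 `&` Y1 @^-1` A1))%E) ->
  forall (l : 'I_L) (u : R), 0 <= u <= 1 -> 0 <= h_l P Z Dt l u.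
Proof.
move=> _ _ _ _ hDt hZ A1 A2 _ _ _ A4 _ _ l u _.
have mZis b : measurable (Zis Z l b) by exact: (hZ [set z | z l = b]).
have eqE (g : R -> R) b : condEZ P Z (fun z => g (pscore P Z Dt z)) (Zis Z l b)
    = condEZ P Z (fun z => g (q P Dt z)) (Zis Z l b).
  apply: eq_bigr => z _; exact: (pq hZ hDt A1 g z (mZis b)).
rewrite /h_l divr_ge0 //; rewrite subr_ge0.
  rewrite !(cprob_condEZ P hZ (fun z => u <= pscore P Z Dt z)) //.
  rewrite (eqE (fun x : R => ((u <= x)%R)%:R)) (eqE (fun x : R => ((u <= x)%R)%:R)).
  apply: (mono_condEZ _ (A4 l)) => z z' zz.
  have := q_mono P hDt A2 zz.
  case: (leP u (q P Dt z)) => // uq qq.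
  by rewrite (le_trans uq qq).
rewrite (eqE id) (eqE id).
apply: (mono_condEZ _ (A4 l)) => z z' zz.
exact: (q_mono P hDt A2 zz).
Qed.
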